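(* Let $d,k\ge 1$, let $w_1,\dots,w_k>0$ with $w_{\max}:=\max_i w_i$, and let $a_i,b_i,c_i\in\mathbb{R}^d$ ($i\in[k]$) be unit vectors. Set $T=\sum_{i\in[k]} w_i\, a_i\otimes b_i\otimes c_i$, $A=[a_1\cdots a_k]$, $B=[b_1\cdots b_k]$, $C=[c_1\cdots c_k]\in\mathbb{R}^{d\times k}$. Let $\alpha>0$ and $\alpha_0>0$ be parameters such that: (i) $\max_{i\ne j}\max\{|\langle a_i,a_j\rangle|,|\langle b_i,b_j\rangle|,|\langle c_i,c_j\rangle|\}\le \alpha/\sqrt d$; (ii) $\max\{\|A\|,\|B\|,\|C\|\}\le 1+\alpha_0\sqrt{k/d}$; (iii) $\|T\|\le \alpha_0 w_{\max}$ and, for every $j\in[k]$, $\big\|\sum_{i\ne j} w_i\langle a_i,a_j\rangle\langle b_i,b_j\rangle c_i\big\|\le \alpha\, w_{\max}\sqrt k/d$. Let $\Psi\in\mathbb{R}^{d\times d\times d}$ be any tensor, $\psi:=\|\Psi\|$, and $\hat T=T+\Psi$. Fix $j\in[k]$ and unit vectors $\hat a,\hat b$ with $\mathrm{dist}(\hat a,a_j)\le\epsilon_a$ and $\mathrm{dist}(\hat b,b_j)\le \epsilon_b$; set $\epsilon:=\max\{\epsilon_a,\epsilon_b\}$ and $$f(\epsilon;k,d):=\alpha\frac{\sqrt k}{d}+\frac{2\alpha}{\sqrt d}\Big(1+\alpha_0\sqrt{\tfrac kd}\Big)^2\epsilon+\alpha_0\epsilon^2 .$$ Suppose $w_j-w_j\epsilon^2-w_{\max}f(\epsilon;k,d)-\psi>0$.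 Let $\hat c:=\hat T(\hat a,\hat b,I)/\|\hat T(\hat a,\hat b,I)\|$. Then $$\mathrm{dist}(\hat c,c_j)\le \frac{w_{\max}f(\epsilon;k,d)+\psi}{w_j-w_j\epsilon^2-w_{\max}f(\epsilon;k,d)-\psi}.$$ Moreover, if this bound satisfies $\mathrm{dist}(\hat c,c_j)\le\epsilon$, then $\hat w:=\hat T(\hat a,\hat b,\hat c)$ satisfies $|\hat w-w_j|\le 2w_j\epsilon^2+w_{\max}f(\epsilon;k,d)+\psi$.
   Context: For a third order tensor $T\in\mathbb{R}^{d\times d\times d}$ and vectors $u,v,w$, the multilinear form is $T(u,v,w)=\sum_{i,j,l}T_{ijl}u_iv_jw_l$, and $T(u,v,I)\in\mathbb{R}^d$ is the vector with $l$-th entry $\sum_{i,j}T_{ijl}u_iv_j$ (similarly $T(I,v,w)$, $T(u,I,w)$). The tensor spectral norm is $\|T\|=\sup_{\|u\|=\|v\|=\|w\|=1}|T(u,v,w)|$. For matrices $\|\cdot\|$ is the spectral norm. For nonzero $u,v\in\mathbb{R}^d$, $\mathrm{dist}(u,v):=\sup_{z\perp u}\frac{\langle z,v\rangle}{\|z\|\|v\|}$. *)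

(* Defs.v *)
From Stdlib Require Import Reals Lra Lia Arith ClassicalEpsilon Classical.
Open Scope R_scope.

(* Vectors in R^n are functions nat -> R (only indices 0..n-1 matter);
   third-order tensors in R^{d x d x d} are functions nat -> nat -> nat -> R. *)

Fixpoint rsum (n : nat) (f : nat -> R) : R :=
  match n with
  | O => 0
  | S m => rsum m f + f m
  end.

(* max_{i<n} f i, with value 0 for n = 0 (only used with positive entries) *)
Fixpoint rmax (n : nat) (f : nat -> R) : R :=
  match n with
  | O => 0
  | S O => f O
  | S m => Rmax (rmax m f) (f m)
  end.

(* Supremum of a set of reals (the least upper bound when it exists);
   convention: the empty set has supremum 0. *)
Definition Rsup (E : R -> Prop) : R :=
  epsilon (inhabits 0)
    (fun l => is_lub E l \/ (~ (exists x, E x) /\ l = 0)).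

Definition dot (n : nat) (u v : nat -> R) : R := rsum n (fun l => u l * v l).
Definition vnorm (n : nat) (u : nat -> R) : R := sqrt (dot n u u).

Definition tform (d : nat) (T : nat -> nat -> nat -> R) (u v w : nat -> R) : R :=
  rsum d (fun i => rsum d (fun j => rsum d (fun l => T i j l * u i * v j * w l))).

Definition tcontr (d : nat) (T : nat -> nat -> nat -> R) (u v : nat -> R) : nat -> R :=
  fun l => rsum d (fun i => rsum d (fun j => T i j l * u i * v j)).

Definition tnorm (d : nat) (T : nat -> nat -> nat -> R) : R :=
  Rsup (fun r => exists u v w, vnorm d u = 1 /\ vnorm d v = 1 /\ vnorm d w = 1 /\
                               r = Rabs (tform d T u v w)).

(* spectral norm of the d x k matrix whose i-th column is (col i) *)
Definition opnorm (d k : nat) (col : nat -> nat -> R) : R :=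
  Rsup (fun r => exists x, vnorm k x = 1 /\
                 r = vnorm d (fun l => rsum k (fun i => col i l * x i))).

Definition vdist (d : nat) (u v : nat -> R) : R :=
  Rsup (fun r => exists z, vnorm d z <> 0 /\ dot d z u = 0 /\
                 r = dot d z v / (vnorm d z * vnorm d v)).

Definition cp_tensor (k : nat) (w : nat -> R) (a b c : nat -> nat -> R)
  : nat -> nat -> nat -> R :=
  fun i j l => rsum k (fun p => w p * a p i * b p j * c p l).

Definition fbound (alpha alpha0 eps : R) (k d : nat) : R :=
  alpha * sqrt (INR k) / INR d
  + 2 * alpha / sqrt (INR d) * (1 + alpha0 * sqrt (INR k / INR d)) ^ 2 * eps
  + alpha0 * eps ^ 2.

(* Main.v *)
Require Import Defs.
From Stdlib Require Import Reals Lra Lia Arith ClassicalEpsilon Classical.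
Open Scope R_scope.

Lemma rsum_ext n f g : (forall i, (i < n)%nat -> f i = g i) -> rsum n f = rsum n g.
Proof. induction n; intros H; simpl; auto. rewrite IHn by (intros; apply H; lia). rewrite H by lia; auto. Qed.
Lemma rsum_plus n f g : rsum n (fun i => f i + g i) = rsum n f + rsum n g.
Proof. induction n; simpl; [ring|rewrite IHn; ring]. Qed.
Lemma rsum_minus n f g : rsum n (fun i => f i - g i) = rsum n f - rsum n g.
Proof. induction n; simpl; [ring|rewrite IHn; ring]. Qed.
Lemma rsum_mul_l n c f : c * rsum n f = rsum n (fun i => c * f i).
Proof. induction n; simpl; [ring|rewrite <- IHn; ring]. Qed.
Lemma rsum_mul_r n c f : rsum n f * c = rsum n (fun i => f i * c).
Proof. induction n; simpl; [ring|rewrite <- IHn; ring]. Qed.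
Lemma rsum_le n f g : (forall i, (i<n)%nat -> f i <= g i) -> rsum n f <= rsum n g.
Proof. induction n; intros H; simpl; [lra|]. assert (f n <= g n) by (apply H; lia).
 assert (rsum n f <= rsum n g) by (apply IHn; intros; apply H; lia). lra. Qed.
Lemma rsum_nonneg n f : (forall i, (i<n)%nat -> 0 <= f i) -> 0 <= rsum n f.
Proof. intros H. replace 0 with (rsum n (fun _ => 0)). apply rsum_le; auto.
 induction n; simpl; auto. rewrite IHn; [ring|intros; apply H; lia]. Qed.
Lemma rsum_zero n f : (forall i, (i<n)%nat -> f i = 0) -> rsum n f = 0.
Proof. induction n; intros H; simpl; auto. rewrite IHn by (intros; apply H; lia). rewrite H by lia; ring. Qed.
Lemma rsum_abs n f : Rabs (rsum n f) <= rsum n (fun i => Rabs (f i)).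
Proof. induction n; simpl. rewrite Rabs_R0; lra.
 eapply Rle_trans. apply Rabs_triang. lra. Qed.
Lemma rsum_swap n m F : rsum n (fun i => rsum m (fun p => F i p)) = rsum m (fun p => rsum n (fun i => F i p)).
Proof. induction n; simpl. symmetry; apply rsum_zero; auto.
 rewrite IHn. rewrite <- rsum_plus. auto. Qed.
Lemma rsum_single n j f : (j < n)%nat -> (forall i, (i<n)%nat -> i<>j -> f i = 0) -> rsum n f = f j.
Proof. induction n; intros Hj H; [lia|]. simpl. destruct (Nat.eq_dec j n).
 subst. rewrite rsum_zero. ring. intros; apply H; lia.
 rewrite IHn; [| lia | intros; apply H; lia]. rewrite (H n); [ring|lia|auto]. Qed.
Lemma rsum_term_le n f i : (forall i, (i<n)%nat -> 0<=f i) -> (i<n)%nat -> f i <= rsum n f.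
Proof. intros H Hi. apply Rle_trans with (rsum n (fun p => if Nat.eqb p i then f p else 0)).
 rewrite (rsum_single n i); auto. simpl. rewrite Nat.eqb_refl. lra.
 intros p _ Hp. apply Nat.eqb_neq in Hp. rewrite Hp; auto.
 apply rsum_le. intros p Hp. destruct (Nat.eqb p i); [lra|apply H; auto]. Qed.
Lemma rsum_split n j f : (j < n)%nat -> rsum n f = f j + rsum n (fun i => if Nat.eqb i j then 0 else f i).
Proof. intros Hj. assert (E: f j = rsum n (fun i => if Nat.eqb i j then f i else 0)).
 rewrite (rsum_single n j); auto. rewrite Nat.eqb_refl; auto.
 intros p _ Hp. apply Nat.eqb_neq in Hp. rewrite Hp; auto.
 rewrite E, <- rsum_plus. apply rsum_ext. intros i _. destruct (Nat.eqb i j); ring. Qed.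

Lemma dot_comm n u v : dot n u v = dot n v u.
Proof. unfold dot. apply rsum_ext; intros; ring. Qed.
Lemma dot_self_nonneg n u : 0 <= dot n u u.
Proof. apply rsum_nonneg. intros; apply Rle_0_sqr. Qed.
Lemma vnorm_nonneg n u : 0 <= vnorm n u.
Proof. apply sqrt_pos. Qed.
Lemma vnorm_sq n u : vnorm n u * vnorm n u = dot n u u.
Proof. apply sqrt_sqrt, dot_self_nonneg. Qed.
Lemma vnorm_ext n u v : (forall i, (i<n)%nat -> u i = v i) -> vnorm n u = vnorm n v.
Proof. intros H. unfold vnorm, dot. f_equal. apply rsum_ext. intros; rewrite H; auto. Qed.
Lemma dot_ext n u v u' v' : (forall i, (i<n)%nat -> u i = u' i) -> (forall i, (i<n)%nat -> v i = v' i) -> dot n u v = dot n u' v'.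
Proof. intros H H'. unfold dot. apply rsum_ext. intros; rewrite H, H'; auto. Qed.

Lemma quad_disc P A Q : 0 <= Q -> (forall t, 0 <= P + 2*t*A + t*t*Q) -> A*A <= P*Q.
Proof. intros HQ H. destruct (Req_dec Q 0).
 - subst. destruct (Req_dec A 0). subst; lra.
   specialize (H (-(Rabs P+1)/(2*A))). exfalso.
   replace (P + 2 * (- (Rabs P + 1) / (2 * A)) * A + - (Rabs P + 1) / (2 * A) * (- (Rabs P + 1) / (2 * A)) * 0) with (P - (Rabs P + 1)) in H by (field; auto).
   pose proof (Rle_abs P). lra.
 - specialize (H (-A/Q)).
   replace (P + 2 * (- A / Q) * A + - A / Q * (- A / Q) * Q) with ((P*Q - A*A)/Q) in H by (field; auto).
   assert (0 < Q) by lra. apply Rmult_le_compat_r with (r:=Q) in H; [|lra].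
   unfold Rdiv in H. rewrite Rmult_assoc, Rinv_l in H; lra. Qed.

Lemma CS_sq n u v : dot n u v * dot n u v <= dot n u u * dot n v v.
Proof. apply quad_disc. apply dot_self_nonneg. intros t.
 replace (dot n u u + 2 * t * dot n u v + t * t * dot n v v) with (dot n (fun i => u i + t * v i) (fun i => u i + t * v i)).
 apply dot_self_nonneg. unfold dot. rewrite !rsum_mul_l. rewrite <- !rsum_plus. apply rsum_ext; intros; ring. Qed.

Lemma CS n u v : Rabs (dot n u v) <= vnorm n u * vnorm n v.
Proof. unfold vnorm. rewrite <- sqrt_mult_alt by apply dot_self_nonneg.
 rewrite <- sqrt_Rsqr_abs. apply sqrt_le_1_alt. unfold Rsqr. apply CS_sq. Qed.

Lemma vnorm_zero n u : vnorm n u = 0 -> forall i, (i<n)%nat -> u i = 0.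
Proof. intros H i Hi. pose proof (vnorm_sq n u). rewrite H in H0.
 assert (u i * u i <= dot n u u). apply (rsum_term_le n (fun l => u l * u l)); auto. intros; apply Rle_0_sqr.
 pose proof (Rle_0_sqr (u i)). unfold Rsqr in H2. nra. Qed.

Lemma comp_le1 n u i : vnorm n u = 1 -> (i<n)%nat -> Rabs (u i) <= 1.
Proof. intros H Hi. pose proof (vnorm_sq n u). rewrite H in H0.
 assert (u i * u i <= dot n u u). apply (rsum_term_le n (fun l => u l * u l)); auto. intros; apply Rle_0_sqr.
 rewrite <- Rabs_R1. apply Rsqr_le_abs_0. unfold Rsqr. lra. Qed.

Lemma vnorm_scale n c u : vnorm n (fun i => c * u i) = Rabs c * vnorm n u.
Proof. unfold vnorm. replace (dot n (fun i => c * u i) (fun i => c * u i)) with (Rsqr c * dot n u u).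
 rewrite sqrt_mult_alt by apply Rle_0_sqr. rewrite sqrt_Rsqr_abs; auto.
 unfold dot, Rsqr. rewrite rsum_mul_l. apply rsum_ext; intros; ring. Qed.

Lemma Rsup_lub E : (exists x, E x) -> (exists M, forall x, E x -> x <= M) -> is_lub E (Rsup E).
Proof. intros Hne Hb. assert (Hbd: bound E). { destruct Hb as [M HM]. exists M. intros x Hx; apply HM; auto. }
 destruct (completeness E Hbd Hne) as [m Hm].
 unfold Rsup. assert (Hs := epsilon_spec (inhabits 0) (fun l => is_lub E l \/ (~ (exists x, E x) /\ l = 0))).
 destruct Hs as [H|[H _]]. exists m; auto. auto. contradiction. Qed.
Lemma Rsup_ge E x : E x -> (exists M, forall y, E y -> y <= M) -> x <= Rsup E.
Proof. intros Hx Hb. destruct (Rsup_lub E) as [H1 _]; eauto. Qed.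
Lemma Rsup_le E M : (forall x, E x -> x <= M) -> 0 <= M -> Rsup E <= M.
Proof. intros H HM. destruct (classic (exists x, E x)) as [Hne|Hne].
 assert (Hb: exists M, forall x, E x -> x <= M) by eauto.
 destruct (Rsup_lub E Hne Hb) as [_ H2]. apply H2. intros x Hx; apply H; auto.
 unfold Rsup. assert (Hs := epsilon_spec (inhabits 0) (fun l => is_lub E l \/ (~ (exists x, E x) /\ l = 0))).
 destruct Hs as [H1|[_ H1]]. exists 0. right; auto.
 destruct H1 as [_ H2]. apply H2. intros x Hx; exfalso; apply Hne; eauto.
 rewrite H1; auto. Qed.

Lemma tform_scale d T u v w a b c :
  tform d T (fun i => a * u i) (fun i => b * v i) (fun i => c * w i) = a*b*c * tform d T u v w.
Proof. unfold tform. rewrite rsum_mul_l. apply rsum_ext; intros.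
 rewrite rsum_mul_l. apply rsum_ext; intros. rewrite rsum_mul_l. apply rsum_ext; intros. ring. Qed.

Lemma tform_zero_l d T u v w : (forall i, (i<d)%nat -> u i = 0) -> tform d T u v w = 0.
Proof. intros H. unfold tform. apply rsum_zero; intros. apply rsum_zero; intros. apply rsum_zero; intros. rewrite H; auto; ring. Qed.
Lemma tform_zero_m d T u v w : (forall i, (i<d)%nat -> v i = 0) -> tform d T u v w = 0.
Proof. intros H. unfold tform. apply rsum_zero; intros. apply rsum_zero; intros. apply rsum_zero; intros. rewrite (H i0); auto; ring. Qed.
Lemma tform_zero_r d T u v w : (forall i, (i<d)%nat -> w i = 0) -> tform d T u v w = 0.
Proof. intros H. unfold tform. apply rsum_zero; intros. apply rsum_zero; intros. apply rsum_zero; intros. rewrite (H i1); auto; ring. Qed.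

Lemma tnorm_bounded d T : exists M, forall y, (exists u v w, vnorm d u = 1 /\ vnorm d v = 1 /\ vnorm d w = 1 /\
                               y = Rabs (tform d T u v w)) -> y <= M.
Proof. exists (rsum d (fun i => rsum d (fun j => rsum d (fun l => Rabs (T i j l))))).
 intros y (u & v & w & Hu & Hv & Hw & ->). unfold tform.
 eapply Rle_trans. apply rsum_abs. apply rsum_le; intros i Hi.
 eapply Rle_trans. apply rsum_abs. apply rsum_le; intros j Hj.
 eapply Rle_trans. apply rsum_abs. apply rsum_le; intros l Hl.
 rewrite !Rabs_mult. pose proof (comp_le1 _ _ _ Hu Hi). pose proof (comp_le1 _ _ _ Hv Hj).
 pose proof (comp_le1 _ _ _ Hw Hl). pose proof (Rabs_pos (T i j l)). pose proof (Rabs_pos (u i)).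
 pose proof (Rabs_pos (v j)). pose proof (Rabs_pos (w l)).
 assert (Rabs (u i) * Rabs (v j) <= 1) by nra.
 assert (Rabs (u i) * Rabs (v j) * Rabs (w l) <= 1) by nra. nra. Qed.

Lemma tnorm_bound d T u v w : Rabs (tform d T u v w) <= tnorm d T * vnorm d u * vnorm d v * vnorm d w.
Proof. destruct (Req_dec (vnorm d u) 0) as [Hu|Hu].
 rewrite tform_zero_l; [rewrite Hu, Rabs_R0; lra| apply vnorm_zero; auto].
 destruct (Req_dec (vnorm d v) 0) as [Hv|Hv].
 rewrite tform_zero_m; [rewrite Hv, Rabs_R0; lra| apply vnorm_zero; auto].
 destruct (Req_dec (vnorm d w) 0) as [Hw|Hw].
 rewrite tform_zero_r; [rewrite Hw, Rabs_R0; lra| apply vnorm_zero; auto].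
 pose proof (vnorm_nonneg d u). pose proof (vnorm_nonneg d v). pose proof (vnorm_nonneg d w).
 set (nu := vnorm d u) in *. set (nv := vnorm d v) in *. set (nw := vnorm d w) in *.
 assert (HH: Rabs (tform d T (fun i => /nu * u i) (fun i => /nv * v i) (fun i => /nw * w i)) <= tnorm d T).
 { apply Rsup_ge; [|apply tnorm_bounded]. exists (fun i => /nu * u i), (fun i => /nv * v i), (fun i => /nw * w i).
   rewrite !vnorm_scale. fold nu nv nw. rewrite !Rabs_inv, !Rabs_pos_eq by lra.
   repeat split; try (field; lra). }
 rewrite tform_scale, Rabs_mult in HH. rewrite !Rabs_mult, !Rabs_inv, !Rabs_pos_eq in HH by lra.
 assert (0 < nu*nv*nw) by (repeat apply Rmult_lt_0_compat; lra).
 apply Rmult_le_compat_r with (r:= nu*nv*nw) in HH; [|lra].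
 replace (/ nu * / nv * / nw * Rabs (tform d T u v w) * (nu * nv * nw)) with (Rabs (tform d T u v w)) in HH by (field; lra).
 lra. Qed.

Lemma tnorm_nonneg d T : (1 <= d)%nat -> 0 <= tnorm d T.
Proof. intros Hd. set (e := fun i : nat => if Nat.eqb i 0 then 1 else 0).
 assert (He: vnorm d e = 1). { unfold vnorm, dot. rewrite (rsum_single d 0). unfold e; simpl. rewrite Rmult_1_l; apply sqrt_1.
   lia. intros i _ Hi. unfold e. apply Nat.eqb_neq in Hi. rewrite Hi. ring. }
 apply Rle_trans with (Rabs (tform d T e e e)). apply Rabs_pos.
 apply Rsup_ge; [|apply tnorm_bounded]. exists e, e, e; auto. Qed.

Lemma opnorm_bounded d k col : exists M, forall y, (exists x, vnorm k x = 1 /\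
                 y = vnorm d (fun l => rsum k (fun i => col i l * x i))) -> y <= M.
Proof. exists (sqrt (rsum d (fun l => rsum k (fun i => Rabs (col i l)) * rsum k (fun i => Rabs (col i l))))).
 intros y (x & Hx & ->). unfold vnorm, dot. apply sqrt_le_1_alt. apply rsum_le. intros l Hl.
 set (s := rsum k (fun i => col i l * x i)). set (c := rsum k (fun i => Rabs (col i l))).
 assert (Rabs s <= c). { eapply Rle_trans. apply rsum_abs. apply rsum_le. intros i Hi.
   rewrite Rabs_mult. pose proof (comp_le1 _ _ _ Hx Hi). pose proof (Rabs_pos (col i l)). nra. }
 pose proof (Rabs_pos s). assert (s*s = Rabs s * Rabs s) by (rewrite <- Rabs_mult; rewrite Rabs_pos_eq; nra). nra. Qed.

Lemma opnorm_bound d k col x : vnorm d (fun l => rsum k (fun i => col i l * x i)) <= opnorm d k col * vnorm k x.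
Proof. destruct (Req_dec (vnorm k x) 0) as [H0|H0].
 - rewrite H0, Rmult_0_r. right. rewrite <- (sqrt_0). unfold vnorm. f_equal. unfold dot. apply rsum_zero; intros.
   rewrite rsum_zero. ring. intros; rewrite (vnorm_zero k x H0); auto; ring.
 - pose proof (vnorm_nonneg k x). set (n := vnorm k x) in *.
   assert (HH: vnorm d (fun l => rsum k (fun i => col i l * (/n * x i))) <= opnorm d k col).
   { apply Rsup_ge; [|apply opnorm_bounded]. exists (fun i => /n * x i). split; auto.
     rewrite vnorm_scale. fold n. rewrite Rabs_inv, Rabs_pos_eq by lra. field; lra. }
   rewrite (vnorm_ext d _ (fun l => /n * rsum k (fun i => col i l * x i))) in HH.
   rewrite vnorm_scale, Rabs_inv, Rabs_pos_eq in HH by lra.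
   apply Rmult_le_compat_r with (r:=n) in HH; [|lra].
   replace (/ n * vnorm d (fun l : nat => rsum k (fun i : nat => col i l * x i)) * n) with (vnorm d (fun l : nat => rsum k (fun i : nat => col i l * x i))) in HH by (field; lra). auto.
   intros; rewrite rsum_mul_l; apply rsum_ext; intros; ring. Qed.

Lemma transpose_bound d k col y M : opnorm d k col <= M -> 0 <= M ->
  vnorm k (fun p => dot d (col p) y) <= M * vnorm d y.
Proof. intros HM HM0. set (q := fun p => dot d (col p) y).
 set (Bq := fun l => rsum k (fun i => col i l * q i)).
 assert (E: dot k q q = dot d y Bq).
 { unfold dot at 1. rewrite (rsum_ext k _ (fun p => rsum d (fun l => q p * (col p l * y l)))).
   rewrite rsum_swap. unfold dot, Bq. apply rsum_ext. intros l _. rewrite rsum_mul_l. apply rsum_ext; intros; ring.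
   intros p _. unfold q at 2. unfold dot. rewrite rsum_mul_l. auto. }
 pose proof (CS d y Bq). pose proof (opnorm_bound d k col q). fold Bq in H0.
 pose proof (vnorm_sq k q). pose proof (vnorm_nonneg k q). pose proof (vnorm_nonneg d y). pose proof (vnorm_nonneg d Bq).
 assert (vnorm k q * vnorm k q <= vnorm d y * (M * vnorm k q)).
 { rewrite H1, E. eapply Rle_trans. apply Rle_abs. eapply Rle_trans. apply H.
   apply Rmult_le_compat_l; auto. eapply Rle_trans. apply H0. apply Rmult_le_compat_r; auto. }
 destruct (Req_dec (vnorm k q) 0). rewrite H6. nra. nra. Qed.

Lemma Rsup_empty E : ~ (exists x, E x) -> Rsup E = 0.
Proof. intros Hn. unfold Rsup. assert (Hs := epsilon_spec (inhabits 0) (fun l => is_lub E l \/ (~ (exists x, E x) /\ l = 0))).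
 destruct Hs as [H1|[_ H1]]. exists 0. right; auto.
 exfalso. destruct H1 as [_ H1].
 set (l := epsilon _ _) in H1. assert (l <= l - 1). apply H1. intros x Hx. exfalso; eauto. lra. auto. Qed.

Lemma Rabs_m1 : Rabs (-1) = 1.
Proof. rewrite Rabs_left; lra. Qed.

Lemma vdist_bounded d u v : vnorm d v = 1 -> exists M, forall r, (exists z, vnorm d z <> 0 /\ dot d z u = 0 /\
                 r = dot d z v / (vnorm d z * vnorm d v)) -> r <= M.
Proof. intros Hv. exists 1. intros r (z & Hz & _ & ->). rewrite Hv, Rmult_1_r.
 pose proof (CS d z v). rewrite Hv in H. pose proof (vnorm_nonneg d z).
 apply Rmult_le_reg_r with (vnorm d z). lra. unfold Rdiv. rewrite Rmult_assoc, Rinv_l by auto.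
 pose proof (Rle_abs (dot d z v)). lra. Qed.

Lemma vdist_nonneg d u v : vnorm d v = 1 -> 0 <= vdist d u v.
Proof. intros Hv. unfold vdist. destruct (classic (exists r, exists z, vnorm d z <> 0 /\ dot d z u = 0 /\
                 r = dot d z v / (vnorm d z * vnorm d v))) as [(r & z & Hz & Hzu & ->)|Hn].
 - assert (H1: dot d z v / (vnorm d z * vnorm d v) <= Rsup (fun r => exists z, vnorm d z <> 0 /\ dot d z u = 0 /\
                 r = dot d z v / (vnorm d z * vnorm d v))).
   { apply Rsup_ge. eauto. apply vdist_bounded; auto. }
   assert (H2: dot d (fun i => -1 * z i) v / (vnorm d (fun i => -1 * z i) * vnorm d v) <= Rsup (fun r => exists z, vnorm d z <> 0 /\ dot d z u = 0 /\
                 r = dot d z v / (vnorm d z * vnorm d v))).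
   { apply Rsup_ge; [|apply vdist_bounded; auto]. exists (fun i => -1 * z i).
     rewrite vnorm_scale, Rabs_m1, Rmult_1_l. repeat split; auto.
     unfold dot in *. rewrite (rsum_ext d _ (fun i => -1 * (z i * u i))) by (intros; ring). rewrite <- rsum_mul_l, Hzu. ring. }
   rewrite vnorm_scale, Rabs_m1, Rmult_1_l in H2.
   replace (dot d (fun i => -1 * z i) v) with (- dot d z v) in H2.
   unfold Rdiv in *. lra. unfold dot. rewrite (rsum_ext d (fun i => -1 * z i * v i) (fun i => -1 * (z i * v i))) by (intros; ring). rewrite <- rsum_mul_l. ring.
 - right. symmetry. apply Rsup_empty. auto. Qed.

Lemma dot_sub_r n q u v x : dot n q (fun l => u l - x * v l) = dot n q u - x * dot n q v.
Proof. unfold dot. rewrite rsum_mul_l, <- rsum_minus. apply rsum_ext; intros; ring. Qed.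
Lemma dot_sub_l n q u v x : dot n (fun l => u l - x * v l) q = dot n u q - x * dot n v q.
Proof. unfold dot. rewrite rsum_mul_l, <- rsum_minus. apply rsum_ext; intros; ring. Qed.

Lemma decomp d u v e : vnorm d u = 1 -> vnorm d v = 1 -> vdist d u v <= e ->
  dot d u v * dot d u v <= 1 /\ dot d v (fun l => u l - dot d u v * v l) = 0 /\
  vnorm d (fun l => u l - dot d u v * v l) <= e /\ 0 <= e /\
  vnorm d (fun l => u l - dot d u v * v l) * vnorm d (fun l => u l - dot d u v * v l) = 1 - dot d u v * dot d u v /\
  (forall q, dot d q u = dot d u v * dot d q v + dot d q (fun l => u l - dot d u v * v l)).
Proof. intros Hu Hv He. set (x := dot d u v). set (t := fun l => u l - x * v l).
 assert (Huu: dot d u u = 1) by (rewrite <- vnorm_sq, Hu; ring). assert (Hvv: dot d v v = 1) by (rewrite <- vnorm_sq, Hv; ring).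
 assert (Hx: x * x <= 1). { pose proof (CS_sq d u v). fold x in H. rewrite Huu, Hvv in H. lra. }
 assert (Hvt: dot d v t = 0). { unfold t. rewrite dot_sub_r, (dot_comm d v u). fold x. rewrite ?Huu, ?Hvv. lra. }
 assert (Htt: dot d t t = 1 - x*x). { unfold t at 1. rewrite dot_sub_l. unfold t. rewrite !dot_sub_r.
   rewrite (dot_comm d v u). fold x. rewrite ?Huu, ?Hvv. lra. }
 pose proof (vdist_nonneg d u v Hv) as Hd0.
 assert (Hnt: vnorm d t = sqrt (1 - x*x)) by (unfold vnorm; rewrite Htt; auto).
 split; auto. split; auto. split; [|split; [lra|split]].
 - destruct (Req_dec (1 - x*x) 0) as [H0|H0].
   + rewrite Hnt, H0, sqrt_0. lra.
   + set (z := fun l => v l - x * u l).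
     assert (Hzu: dot d z u = 0). { unfold z. rewrite dot_sub_l. rewrite (dot_comm d v u). fold x. rewrite ?Huu, ?Hvv. lra. }
     assert (Hzv: dot d z v = 1 - x*x). { unfold z. rewrite dot_sub_l. fold x. rewrite ?Huu, ?Hvv. lra. }
     assert (Hzz: dot d z z = 1 - x*x). { unfold z at 1. rewrite dot_sub_l. unfold z. rewrite !dot_sub_r.
       rewrite (dot_comm d v u). fold x. rewrite ?Huu, ?Hvv. lra. }
     assert (Hnz: vnorm d z = sqrt (1 - x*x)) by (unfold vnorm; rewrite Hzz; auto).
     assert (Hpos: 0 < sqrt (1 - x*x)) by (apply sqrt_lt_R0; lra).
     apply Rle_trans with (vdist d u v); auto.
     apply Rsup_ge; [|apply vdist_bounded; auto]. exists z. split; [lra|split; auto].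
     rewrite Hzv, Hnz, Hv, Hnt. rewrite <- (sqrt_sqrt (1 - x*x)) at 2 by lra. field. lra.
 - rewrite vnorm_sq. auto.
 - intros q. unfold t. rewrite dot_sub_r. ring. Qed.

Lemma rsum_prod3 d f g h K : K * rsum d f * rsum d g * rsum d h =
  rsum d (fun i => rsum d (fun j => rsum d (fun l => K * f i * g j * h l))).
Proof. replace (K * rsum d f * rsum d g * rsum d h) with (rsum d f * (K * rsum d g * rsum d h)) by ring.
 rewrite rsum_mul_r. apply rsum_ext; intros i _.
 replace (f i * (K * rsum d g * rsum d h)) with (rsum d g * (K * f i * rsum d h)) by ring.
 rewrite rsum_mul_r. apply rsum_ext; intros j _.
 replace (g j * (K * f i * rsum d h)) with (K * f i * g j * rsum d h) by ring.
 rewrite rsum_mul_l. apply rsum_ext; intros; ring. Qed.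

Lemma cp_expand d k w a b c u v z : tform d (cp_tensor k w a b c) u v z =
  rsum k (fun p => w p * dot d (a p) u * dot d (b p) v * dot d (c p) z).
Proof. unfold tform, cp_tensor.
 rewrite (rsum_ext d _ (fun i => rsum k (fun p => rsum d (fun j => rsum d (fun l =>
     w p * a p i * b p j * c p l * u i * v j * z l))))).
 rewrite rsum_swap. apply rsum_ext; intros p _. unfold dot. rewrite rsum_prod3. apply rsum_ext; intros i _.
 apply rsum_ext; intros j _. apply rsum_ext; intros; ring.
 intros i _. rewrite (rsum_ext d _ (fun j => rsum k (fun p => rsum d (fun l =>
     w p * a p i * b p j * c p l * u i * v j * z l)))).
 rewrite rsum_swap. auto.
 intros j _. rewrite (rsum_ext d _ (fun l => rsum k (fun p => w p * a p i * b p j * c p l * u i * v j * z l))).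
 rewrite rsum_swap. auto.
 intros l _. rewrite !rsum_mul_r. auto. Qed.

Lemma tcontr_dot d X u v z : dot d (tcontr d X u v) z = tform d X u v z.
Proof. unfold dot, tcontr, tform.
 rewrite (rsum_ext d _ (fun l => rsum d (fun i => rsum d (fun j => X i j l * u i * v j * z l)))).
 rewrite rsum_swap. apply rsum_ext; intros i _. rewrite rsum_swap. auto.
 intros l _. rewrite rsum_mul_r. apply rsum_ext; intros i _. rewrite rsum_mul_r. auto. Qed.

Lemma tform_add d X Y u v z : tform d (fun x y w => X x y w + Y x y w) u v z = tform d X u v z + tform d Y u v z.
Proof. unfold tform. rewrite <- rsum_plus. apply rsum_ext; intros.
 rewrite <- rsum_plus. apply rsum_ext; intros. rewrite <- rsum_plus. apply rsum_ext; intros. ring. Qed.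

Lemma rmax_ge k w i : (i < k)%nat -> w i <= rmax k w.
Proof. induction k; intros Hi; [lia|]. destruct k. simpl. assert (i = 0)%nat by lia. subst; lra.
 change (rmax (S (S k)) w) with (Rmax (rmax (S k) w) (w (S k))).
 destruct (Nat.eq_dec i (S k)). subst. apply Rmax_r. eapply Rle_trans. apply IHk. lia. apply Rmax_l. Qed.

Lemma weighted_sum_bound k g q r K : (forall p, (p<k)%nat -> Rabs (g p) <= K) ->
  Rabs (rsum k (fun p => g p * q p * r p)) <= K * vnorm k q * vnorm k r.
Proof. intros Hg. eapply Rle_trans. apply rsum_abs.
 apply Rle_trans with (rsum k (fun p => K * (Rabs (q p) * Rabs (r p)))).
 apply rsum_le. intros p Hp. rewrite !Rabs_mult. pose proof (Hg p Hp). pose proof (Rabs_pos (q p)). pose proof (Rabs_pos (r p)).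
 pose proof (Rabs_pos (g p)). rewrite Rmult_assoc. apply Rmult_le_compat_r; nra.
 rewrite <- rsum_mul_l. fold (dot k (fun p => Rabs (q p)) (fun p => Rabs (r p))).
 assert (Hq: vnorm k (fun p => Rabs (q p)) = vnorm k q). { unfold vnorm, dot. f_equal. apply rsum_ext; intros.
   rewrite <- Rabs_mult. apply Rabs_pos_eq. apply Rle_0_sqr. }
 assert (Hr: vnorm k (fun p => Rabs (r p)) = vnorm k r). { unfold vnorm, dot. f_equal. apply rsum_ext; intros.
   rewrite <- Rabs_mult. apply Rabs_pos_eq. apply Rle_0_sqr. }
 destruct k. simpl. unfold vnorm, dot; simpl. rewrite sqrt_0. lra.
 assert (0 <= K). { specialize (Hg O ltac:(lia)). pose proof (Rabs_pos (g O)). lra. }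
 pose proof (CS (S k) (fun p => Rabs (q p)) (fun p => Rabs (r p))). rewrite Hq, Hr in H0.
 rewrite Rmult_assoc. apply Rmult_le_compat_l; auto. eapply Rle_trans. apply Rle_abs. auto. Qed.

Lemma Rabs_triang5 a1 a2 a3 a4 a5 : Rabs (a1+a2+a3+a4+a5) <= Rabs a1 + Rabs a2 + Rabs a3 + Rabs a4 + Rabs a5.
Proof. pose proof (Rabs_triang (a1+a2+a3+a4) a5). pose proof (Rabs_triang (a1+a2+a3) a4).
 pose proof (Rabs_triang (a1+a2) a3). pose proof (Rabs_triang a1 a2). lra. Qed.

Lemma div_le_helper u v p q : 0 < p -> 0 < q -> u * q <= v * p -> u / p <= v / q.
Proof. intros Hp Hq H. apply Rmult_le_reg_r with (p*q). nra.
 replace (u / p * (p * q)) with (u*q) by (field; lra). replace (v / q * (p * q)) with (v*p) by (field; lra). auto. Qed.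

Theorem mainTheorem1
  (d k : nat) (w : nat -> R) (a b c : nat -> nat -> R) (alpha alpha0 : R)
  (Psi : nat -> nat -> nat -> R) (j : nat) (ahat bhat : nat -> R) (eps_a eps_b : R) :
  (1 <= d)%nat -> (1 <= k)%nat ->
  (forall i, (i < k)%nat -> 0 < w i) ->
  (forall i, (i < k)%nat -> vnorm d (a i) = 1 /\ vnorm d (b i) = 1 /\ vnorm d (c i) = 1) ->
  0 < alpha -> 0 < alpha0 ->
  (* (i) incoherence *)
  (forall i i', (i < k)%nat -> (i' < k)%nat -> i <> i' ->
     Rmax (Rabs (dot d (a i) (a i')))
       (Rmax (Rabs (dot d (b i) (b i'))) (Rabs (dot d (c i) (c i'))))
     <= alpha / sqrt (INR d)) ->
  (* (ii) spectral norms of the factor matrices *)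
  Rmax (opnorm d k a) (Rmax (opnorm d k b) (opnorm d k c))
    <= 1 + alpha0 * sqrt (INR k / INR d) ->
  (* (iii) *)
  tnorm d (cp_tensor k w a b c) <= alpha0 * rmax k w ->
  (forall j', (j' < k)%nat ->
     vnorm d (fun l => rsum k (fun i => if Nat.eqb i j' then 0
                else w i * dot d (a i) (a j') * dot d (b i) (b j') * c i l))
     <= alpha * rmax k w * sqrt (INR k) / INR d) ->
  (j < k)%nat ->
  vnorm d ahat = 1 -> vnorm d bhat = 1 ->
  vdist d ahat (a j) <= eps_a -> vdist d bhat (b j) <= eps_b ->
  let wmax := rmax k w in
  let psi := tnorm d Psi in
  let That := fun x y z => cp_tensor k w a b c x y z + Psi x y z in
  let eps := Rmax eps_a eps_b in
  let f := fbound alpha alpha0 eps k d in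
  w j - w j * eps ^ 2 - wmax * f - psi > 0 ->
  let v := tcontr d That ahat bhat in
  let chat := fun l => v l / vnorm d v in
  vdist d chat (c j) <= (wmax * f + psi) / (w j - w j * eps ^ 2 - wmax * f - psi)
  /\ (vdist d chat (c j) <= eps ->
      Rabs (tform d That ahat bhat chat - w j) <= 2 * w j * eps ^ 2 + wmax * f + psi).
Proof.
 intros Hd Hk Hw Hn Hal Hal0 Hinc Hop HT HH Hj Ha Hb Hda Hdb wmax psi That eps f Hpos v chat.
 destruct (Hn j Hj) as (Haj & Hbj & Hcj).
 destruct (decomp d ahat (a j) eps_a Ha Haj Hda) as (Hx2 & Hat0 & Hatle & Hea0 & Hatsq & Hdeca).
 destruct (decomp d bhat (b j) eps_b Hb Hbj Hdb) as (Hy2 & Hbt0 & Hbtle & Heb0 & Hbtsq & Hdecb).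
 set (x := dot d ahat (a j)) in *. set (y := dot d bhat (b j)) in *.
 set (at_ := fun l => ahat l - x * a j l) in *. set (bt := fun l => bhat l - y * b j l) in *.
 assert (Hwj: 0 < w j) by auto.
 assert (Hwm: w j <= wmax) by (apply rmax_ge; auto).
 set (M := 1 + alpha0 * sqrt (INR k / INR d)) in *.
 assert (HM: 1 <= M). { unfold M. pose proof (sqrt_pos (INR k / INR d)). nra. }
 assert (HopA: opnorm d k a <= M) by (eapply Rle_trans; [apply Rmax_l|apply Hop]).
 assert (HopB: opnorm d k b <= M) by (eapply Rle_trans; [|apply Hop]; eapply Rle_trans; [apply Rmax_l|apply Rmax_r]).
 assert (HopC: opnorm d k c <= M) by (eapply Rle_trans; [|apply Hop]; eapply Rle_trans; [apply Rmax_r|apply Rmax_r]).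
 assert (Hpsi: 0 <= psi) by (apply tnorm_nonneg; auto).
 assert (Hea: eps_a <= eps) by apply Rmax_l. assert (Heb: eps_b <= eps) by apply Rmax_r.
 assert (Hsd: 0 < sqrt (INR d)). { apply sqrt_lt_R0. apply lt_0_INR. lia. }
 set (K := wmax * (alpha / sqrt (INR d))).
 assert (HK: 0 <= K). { unfold K. apply Rmult_le_pos. lra. unfold Rdiv. apply Rmult_le_pos. lra. left; apply Rinv_0_lt_compat; auto. }
 assert (Hx1: Rabs x <= 1) by (rewrite <- Rabs_R1; apply Rsqr_le_abs_0; unfold Rsqr; lra).
 assert (Hy1: Rabs y <= 1) by (rewrite <- Rabs_R1; apply Rsqr_le_abs_0; unfold Rsqr; lra).
 assert (Hinc_a: forall i, (i<k)%nat -> i <> j -> Rabs (dot d (a i) (a j)) <= alpha / sqrt (INR d)).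
 { intros i Hi Hij. eapply Rle_trans; [|apply (Hinc i j Hi Hj Hij)]. apply Rmax_l. }
 assert (Hinc_b: forall i, (i<k)%nat -> i <> j -> Rabs (dot d (b i) (b j)) <= alpha / sqrt (INR d)).
 { intros i Hi Hij. eapply Rle_trans; [|apply (Hinc i j Hi Hj Hij)]. eapply Rle_trans; [apply Rmax_l|apply Rmax_r]. }
 set (N := wmax * f + psi).
 set (s := w j * x * y).
 set (E := fun l => v l - s * c j l).
 assert (Hdual: forall z, Rabs (dot d E z) <= N * vnorm d z).
 { intros z. pose proof (vnorm_nonneg d z) as Hz0.
   set (g := fun p => dot d (c p) z).
   assert (Hexp: dot d E z = rsum k (fun i => if Nat.eqb i j then 0 else w i * dot d (a i) ahat * dot d (b i) bhat * g i) + tform d Psi ahat bhat z).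
   { unfold E. rewrite dot_sub_l. unfold v. rewrite tcontr_dot. unfold That. rewrite (tform_add d (cp_tensor k w a b c) Psi).
     rewrite cp_expand. rewrite (rsum_split k j) by auto. rewrite (dot_comm d (a j) ahat), (dot_comm d (b j) bhat). fold x y.
     rewrite (dot_comm d (c j) z). unfold s, g. ring. }
   set (A_ := fun i => dot d (a i) (a j)). set (B_ := fun i => dot d (b i) (b j)).
   set (al := fun i => dot d (a i) at_). set (be := fun i => dot d (b i) bt).
   set (S1 := rsum k (fun i => if Nat.eqb i j then 0 else w i * A_ i * B_ i * g i)).
   set (S2 := rsum k (fun i => (if Nat.eqb i j then 0 else w i * A_ i) * be i * g i)).
   set (S3 := rsum k (fun i => (if Nat.eqb i j then 0 else w i * B_ i) * al i * g i)).
   set (S4 := rsum k (fun i => w i * al i * be i * g i)).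
   assert (HR: rsum k (fun i => if Nat.eqb i j then 0 else w i * dot d (a i) ahat * dot d (b i) bhat * g i) = x*y*S1 + x*S2 + y*S3 + S4).
   { unfold S4. rewrite (rsum_split k j (fun i => w i * al i * be i * g i)) by auto. cbv beta.
     assert (Halj: al j = 0) by exact Hat0. rewrite Halj, Rmult_0_r, Rmult_0_l, Rmult_0_l, Rplus_0_l.
     unfold S1, S2, S3. rewrite !rsum_mul_l, <- !rsum_plus. apply rsum_ext. intros i Hi. destruct (Nat.eqb i j). ring.
     unfold A_, B_, al, be. rewrite (Hdeca (a i)), (Hdecb (b i)). ring. }
   assert (HS1: Rabs S1 <= alpha * wmax * sqrt (INR k) / INR d * vnorm d z).
   { pose proof (HH j Hj) as HHj.
     assert (S1 = dot d (fun l => rsum k (fun i => if Nat.eqb i j then 0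
                else w i * dot d (a i) (a j) * dot d (b i) (b j) * c i l)) z) as ->.
     { unfold S1, dot. rewrite (rsum_ext d _ (fun l => rsum k (fun i => (if Nat.eqb i j then 0
                else w i * dot d (a i) (a j) * dot d (b i) (b j) * c i l) * z l))).
       rewrite rsum_swap. apply rsum_ext. intros i _. destruct (Nat.eqb i j). symmetry; apply rsum_zero; intros; ring.
       unfold g, A_, B_, dot. rewrite rsum_mul_l. apply rsum_ext; intros; ring.
       intros; apply rsum_mul_r. }
     eapply Rle_trans. apply CS. apply Rmult_le_compat_r; auto. }
   assert (HS2: Rabs S2 <= K * (M * eps_b) * (M * vnorm d z)).
   { eapply Rle_trans. apply weighted_sum_bound with (K := K).
     intros p Hp. destruct (Nat.eqb_spec p j). rewrite Rabs_R0; auto.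
     rewrite Rabs_mult, (Rabs_pos_eq (w p)) by (left; auto). unfold K. apply Rmult_le_compat; auto. left; auto. apply Rabs_pos.
     apply rmax_ge; auto. apply Hinc_a; auto.
     pose proof (transpose_bound d k b bt M HopB ltac:(lra)). pose proof (transpose_bound d k c z M HopC ltac:(lra)).
     fold be in H. fold g in H0. pose proof (vnorm_nonneg k be). pose proof (vnorm_nonneg k g).
     apply Rmult_le_compat; auto. apply Rmult_le_pos; auto. apply Rmult_le_compat_l; auto.
     eapply Rle_trans; [apply H|]. apply Rmult_le_compat_l; lra. }
   assert (HS3: Rabs S3 <= K * (M * eps_a) * (M * vnorm d z)).
   { eapply Rle_trans. apply weighted_sum_bound with (K := K).
     intros p Hp. destruct (Nat.eqb_spec p j). rewrite Rabs_R0; auto.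
     rewrite Rabs_mult, (Rabs_pos_eq (w p)) by (left; auto). unfold K. apply Rmult_le_compat; auto. left; auto. apply Rabs_pos.
     apply rmax_ge; auto. apply Hinc_b; auto.
     pose proof (transpose_bound d k a at_ M HopA ltac:(lra)). pose proof (transpose_bound d k c z M HopC ltac:(lra)).
     fold al in H. fold g in H0. pose proof (vnorm_nonneg k al). pose proof (vnorm_nonneg k g).
     apply Rmult_le_compat; auto. apply Rmult_le_pos; auto. apply Rmult_le_compat_l; auto.
     eapply Rle_trans; [apply H|]. apply Rmult_le_compat_l; lra. }
   assert (HS4: Rabs S4 <= alpha0 * wmax * eps_a * eps_b * vnorm d z).
   { assert (S4 = tform d (cp_tensor k w a b c) at_ bt z) as -> by (rewrite cp_expand; auto).
     eapply Rle_trans. apply tnorm_bound. pose proof (vnorm_nonneg d at_). pose proof (vnorm_nonneg d bt).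
     pose proof (tnorm_nonneg d (cp_tensor k w a b c) Hd). change (rmax k w) with wmax in HT.
     apply Rmult_le_compat_r; auto. apply Rmult_le_compat; auto. apply Rmult_le_pos; auto.
     apply Rmult_le_compat; auto. }
   assert (HP: Rabs (tform d Psi ahat bhat z) <= psi * vnorm d z).
   { eapply Rle_trans. apply tnorm_bound. rewrite Ha, Hb. fold psi. lra. }
   rewrite Hexp, HR. eapply Rle_trans. apply Rabs_triang5.
   assert (Rabs (x*y*S1) <= Rabs S1). { rewrite !Rabs_mult. pose proof (Rabs_pos x). pose proof (Rabs_pos y). pose proof (Rabs_pos S1).
     assert (Rabs x * Rabs y <= 1) by nra. nra. }
   assert (Rabs (x*S2) <= Rabs S2). { rewrite !Rabs_mult. pose proof (Rabs_pos x). pose proof (Rabs_pos S2). nra. }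
   assert (Rabs (y*S3) <= Rabs S3). { rewrite !Rabs_mult. pose proof (Rabs_pos y). pose proof (Rabs_pos S3). nra. }
   assert (Hee: eps_a*eps_b <= eps*eps) by nra.
   assert (Hf: wmax * f = alpha*wmax*sqrt (INR k)/INR d + K*M*M*(2*eps) + alpha0*wmax*(eps*eps)).
   { unfold f, fbound, K, M. unfold Rdiv. ring. }
   assert (Q1: K*(M*eps_b)*(M*vnorm d z) + K*(M*eps_a)*(M*vnorm d z) <= K*M*M*(2*eps)*vnorm d z).
   { replace (K*(M*eps_b)*(M*vnorm d z) + K*(M*eps_a)*(M*vnorm d z)) with ((K*M*M*vnorm d z)*(eps_a+eps_b)) by ring.
     replace (K*M*M*(2*eps)*vnorm d z) with ((K*M*M*vnorm d z)*(2*eps)) by ring.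
     apply Rmult_le_compat_l. apply Rmult_le_pos; [apply Rmult_le_pos; [apply Rmult_le_pos|]|]; lra. lra. }
   assert (Q2: alpha0 * wmax * eps_a * eps_b * vnorm d z <= alpha0*wmax*(eps*eps)*vnorm d z).
   { replace (alpha0 * wmax * eps_a * eps_b * vnorm d z) with ((alpha0*wmax*vnorm d z)*(eps_a*eps_b)) by ring.
     replace (alpha0*wmax*(eps*eps)*vnorm d z) with ((alpha0*wmax*vnorm d z)*(eps*eps)) by ring.
     apply Rmult_le_compat_l; auto. apply Rmult_le_pos; [apply Rmult_le_pos|]; lra. }
   unfold N. rewrite Rmult_plus_distr_r, Hf. lra. }
 assert (HNdef: N = wmax * f + psi) by reflexivity.
 assert (HM0: 0 <= 1 + alpha0 * sqrt (INR k / INR d)) by (unfold M in HM; lra).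
 assert (Heps0: 0 <= eps) by lra.
 assert (Hf0: 0 <= f).
 { unfold f, fbound, Rdiv. assert (0 < INR d) by (apply lt_0_INR; lia).
   repeat first [apply Rplus_le_le_0_compat | apply Rmult_le_pos | apply pow_le | apply sqrt_pos | (left; apply Rinv_0_lt_compat) | lra]. }
 assert (HN0: 0 <= N) by (rewrite HNdef; pose proof (Rmult_le_pos wmax f ltac:(lra) Hf0); lra).
 assert (HEn: vnorm d E <= N).
 { pose proof (Hdual E). rewrite <- vnorm_sq, Rabs_pos_eq in H by (apply Rmult_le_pos; apply vnorm_nonneg).
   pose proof (vnorm_nonneg d E). nra. }
 assert (Hxx: 1 - eps^2 <= x * x). { pose proof (vnorm_nonneg d at_). assert (vnorm d at_ <= eps) by lra. nra. }
 assert (Hyy: 1 - eps^2 <= y * y). { pose proof (vnorm_nonneg d bt). assert (vnorm d bt <= eps) by lra. nra. }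
 assert (Hxy: 1 - eps^2 <= Rabs x * Rabs y).
 { pose proof (Rabs_pos x). pose proof (Rabs_pos y).
   assert (Rabs x * Rabs x = x * x) by (rewrite <- Rabs_mult; apply Rabs_pos_eq; apply Rle_0_sqr).
   assert (Rabs y * Rabs y = y * y) by (rewrite <- Rabs_mult; apply Rabs_pos_eq; apply Rle_0_sqr).
   destruct (Rle_dec (1 - eps^2) 0). nra.
   assert ((1-eps^2)*(1-eps^2) <= (Rabs x * Rabs y) * (Rabs x * Rabs y)).
   { replace ((Rabs x * Rabs y) * (Rabs x * Rabs y)) with ((Rabs x * Rabs x) * (Rabs y * Rabs y)) by ring.
     rewrite H1, H2. apply Rmult_le_compat; lra. }
   apply Rnot_le_lt in n. destruct (Rle_dec (1 - eps^2) (Rabs x * Rabs y)); auto. apply Rnot_le_lt in n0.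
   exfalso. assert (0 <= Rabs x * Rabs y) by (apply Rmult_le_pos; auto).
   assert ((Rabs x * Rabs y) * (Rabs x * Rabs y) < (1-eps^2)*(1-eps^2)) by (apply Rmult_le_0_lt_compat; auto). lra. }
 assert (Hsabs: Rabs s = w j * (Rabs x * Rabs y)) by (unfold s; rewrite !Rabs_mult, Rabs_pos_eq by lra; ring).
 assert (Hs_lo: w j * (1 - eps^2) <= Rabs s) by (rewrite Hsabs; apply Rmult_le_compat_l; lra).
 assert (Hs_hi: Rabs s <= w j). { rewrite Hsabs. pose proof (Rabs_pos x). pose proof (Rabs_pos y).
   assert (Rabs x * Rabs y <= 1) by nra. nra. }
 assert (HD: N < Rabs s) by nra.
 assert (Hvv: dot d v v = dot d E E + 2 * s * dot d (c j) E + s * s).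
 { assert (Hcc: dot d (c j) (c j) = 1) by (rewrite <- vnorm_sq, Hcj; ring).
   replace (s*s) with (s*s*dot d (c j) (c j)) by (rewrite Hcc; ring).
   unfold E, dot. rewrite !rsum_mul_l, <- !rsum_plus. apply rsum_ext. intros; ring. }
 assert (HcE: Rabs (dot d (c j) E) <= vnorm d E) by (eapply Rle_trans; [apply CS|]; rewrite Hcj; lra).
 set (nv := vnorm d v).
 assert (Hnv2: nv * nv = dot d v v) by apply vnorm_sq.
 assert (Hnv0: 0 <= nv) by apply vnorm_nonneg.
 assert (HsE: Rabs (s * dot d (c j) E) <= Rabs s * vnorm d E) by (rewrite Rabs_mult; apply Rmult_le_compat_l; auto; apply Rabs_pos).
 assert (Hss: s * s = Rabs s * Rabs s) by (rewrite <- Rabs_mult; symmetry; apply Rabs_pos_eq; apply Rle_0_sqr).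
 assert (HEE: dot d E E = vnorm d E * vnorm d E) by (symmetry; apply vnorm_sq).
 pose proof (vnorm_nonneg d E) as HE0.
 assert (Hnv_lo: Rabs s - vnorm d E <= nv).
 { destruct (Rle_dec (Rabs s - vnorm d E) nv); auto. exfalso.
   pose proof (Rle_abs (s * dot d (c j) E)). pose proof (Rabs_Ropp (s * dot d (c j) E)). pose proof (Rle_abs (- (s * dot d (c j) E))).
   nra. }
 assert (Hnv_hi: nv <= Rabs s + vnorm d E).
 { destruct (Rle_dec nv (Rabs s + vnorm d E)); auto. exfalso.
   pose proof (Rle_abs (s * dot d (c j) E)). nra. }
 assert (Hnvpos: 0 < nv) by lra.
 split.
 - unfold vdist. apply Rsup_le.
   + intros r (z & Hz & Hzc & ->).
     assert (Hzv: dot d z v = 0).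
     { assert (dot d z chat = dot d z v / nv). { unfold chat, dot, Rdiv. rewrite rsum_mul_r. apply rsum_ext; intros; fold nv; ring. }
       rewrite Hzc in H. apply Rmult_eq_reg_r with (/nv). rewrite Rmult_0_l. symmetry; auto.
       apply Rinv_neq_0_compat; lra. }
     assert (HzE: dot d z E = - (s * dot d z (c j))) by (unfold E; rewrite dot_sub_r; lra).
     pose proof (CS d z E) as HCS. rewrite HzE, Rabs_Ropp, Rabs_mult in HCS.
     pose proof (vnorm_nonneg d z). pose proof (Rabs_pos (dot d z (c j))).
     rewrite Hcj, Rmult_1_r.
     apply div_le_helper. destruct H; auto. exfalso; auto. lra.
     eapply Rle_trans. apply (Rmult_le_compat_r); [lra|apply Rle_abs].
     apply Rle_trans with (Rabs (dot d z (c j)) * Rabs s). apply Rmult_le_compat_l; auto. lra.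
     rewrite Rmult_comm. eapply Rle_trans. apply HCS. rewrite Rmult_comm. apply Rmult_le_compat_r; auto.
   + unfold Rdiv. apply Rmult_le_pos; auto. left; apply Rinv_0_lt_compat; lra.
 - intros _. assert (Htf: tform d That ahat bhat chat = nv).
   { rewrite <- tcontr_dot. fold v. assert (dot d v chat = dot d v v / nv).
     { unfold chat, dot, Rdiv. rewrite rsum_mul_r. apply rsum_ext; intros; fold nv; ring. }
     rewrite H, <- Hnv2. field. lra. }
   rewrite Htf. apply Rabs_le. assert (0 <= w j * eps^2) by (apply Rmult_le_pos; [lra| apply pow2_ge_0]). nra.
Qed.
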